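(* Suppose the weights satisfy the discrete Pearson equations $\theta(k+1)w^{(a)}(k+1)=\sigma^{(a)}(k)w^{(a)}(k)$, $k\in\mathbb N_0$, $a\in\{1,2\}$, with $\theta,\sigma^{(1)},\sigma^{(2)}$ polynomials and $\theta(0)=0$. Then \[ \Pi^{-1}\theta(T)=\sigma^{(1)}\big({T^{(1)}}^\top\big){\Pi^{(1)}}^\top+\sigma^{(2)}\big({T^{(2)}}^\top\big){\Pi^{(2)}}^\top. \]
   Context: Let $w^{(1)},w^{(2)}:\mathbb N_0\to\mathbb C$ be weights, $X(x)=(1,x,x^2,\dots)^\top$, $X^{(1)}(x)=(1,0,x,0,\dots)^\top$, $X^{(2)}(x)=(0,1,0,x,\dots)^\top$, and $\mathscr M=\sum_k X(k)(w^{(1)}(k)X^{(1)}(k)+w^{(2)}(k)X^{(2)}(k))^\top$ the moment matrix (series absolutely convergent). Assume all leading principal minors of $\mathscr M$ are nonzero, so $\mathscr M=S^{-1}H\tilde S^{-\top}$ with $S,\tilde S$ lower unitriangular and $H$ diagonal. $\Lambda$ is the matrix with ones on the first superdiagonal, $I^{(1)}=\operatorname{diag}(1,0,1,0,\dots)$, $I^{(2)}=\operatorname{diag}(0,1,0,1,\dots)$, $\Lambda^{(a)}=\Lambda^2I^{(a)}$. $T=S\Lambda S^{-1}$ and $T^{(a)}=H^{-1}\tilde S\Lambda^{(a)}\tilde S^{-1}H$. $L$ is the Pascal matrix $L_{n,m}=\binom nm$ ($n\ge m$), $\Pi=SLS^{-1}$, $\Pi^{-1}=SL^{-1}S^{-1}$;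 $L^{(a)}$ has only nonzero entries $L^{(a)}_{2n+a-1,2m+a-1}=\binom nm$ ($n\ge m$), and $\Pi^{(a)}=H^{-1}\tilde SL^{(a)}\tilde S^{-1}H$. *)

(* Defs.v *)
From mathcomp Require Import all_boot all_order all_algebra.
From mathcomp Require Import all_classical all_reals all_analysis.
From mathcomp Require Import complex.
Set Implicit Arguments. Unset Strict Implicit. Unset Printing Implicit Defensive.
Import Order.TTheory GRing.Theory Num.Theory.
Import numFieldNormedType.Exports.
Local Open Scope ring_scope.

Definition cplx (R : realType) : numFieldType := R[i].

(* Semi-infinite matrices indexed by N_0 x N_0. *)
Definition imx (K : Type) := nat -> nat -> K.

Section InfMatrices.
Variable K : numFieldType.

(* Product of semi-infinite matrices: (AB)_{n,m} = sum_{k>=0} A_{n,k} B_{k,m}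
   (a series; all products occurring below have finitely many nonzero terms). *)
Definition imul (A B : imx K) : imx K :=
  fun n m => limn (series (fun k => A n k * B k m)).
Definition iadd (A B : imx K) : imx K := fun n m => A n m + B n m.
Definition iid : imx K := fun n m => (n == m)%:R.
Definition itr (A : imx K) : imx K := fun n m => A m n.
Definition idiag (d : nat -> K) : imx K := fun n m => if n == m then d n else 0.
Definition ipow (A : imx K) (j : nat) : imx K := iter j (imul A) iid.
Definition ipoly (p : {poly K}) (A : imx K) : imx K :=
  fun n m => \sum_(i < size p) p`_i * ipow A i n m.

Definition lower_tri (A : imx K) : Prop := forall n m, (n < m)%N -> A n m = 0.
Definition lower_unitri (A : imx K) : Prop := lower_tri A /\ forall n, A n n = 1.
Definition is_inv_lt (A B : imx K) : Prop :=
  lower_tri B /\ imul A B = iid /\ imul B A = iid.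

Definition Lam : imx K := fun n m => (m == n.+1)%:R.
Definition I1 : imx K := idiag (fun n => (~~ odd n)%:R).
Definition I2 : imx K := idiag (fun n => (odd n)%:R).
Definition Lam1 : imx K := imul (imul Lam Lam) I1.
Definition Lam2 : imx K := imul (imul Lam Lam) I2.

Definition pascal : imx K := fun n m => 'C(n, m)%:R.
Definition pascal1 : imx K :=
  fun n m => if ~~ odd n && ~~ odd m then 'C(n./2, m./2)%:R else 0.
Definition pascal2 : imx K :=
  fun n m => if odd n && odd m then 'C(n./2, m./2)%:R else 0.

Definition X1 (x : K) (m : nat) : K := if odd m then 0 else x ^+ m./2.
Definition X2 (x : K) (m : nat) : K := if odd m then x ^+ m./2 else 0.

Definition moment_term (w1 w2 : nat -> K) (n m k : nat) : K :=
  (k%:R) ^+ n * (w1 k * X1 k%:R m + w2 k * X2 k%:R m).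
(* moment matrix M = sum_k X(k) (w1(k) X^(1)(k) + w2(k) X^(2)(k))^T *)
Definition moment (w1 w2 : nat -> K) : imx K :=
  fun n m => limn (series (moment_term w1 w2 n m)).

Definition lead_block (A : imx K) (N : nat) : 'M[K]_N := \matrix_(i < N, j < N) A i j.

End InfMatrices.

(* Main.v *)
Require Import Defs.
From mathcomp Require Import all_boot all_order all_algebra.
From mathcomp Require Import all_classical all_reals all_analysis.
From mathcomp Require Import complex.
From mathcomp Require Import ring.
Import Order.TTheory GRing.Theory Num.Theory.
Import numFieldNormedType.Exports.
Local Open Scope ring_scope.
Local Open Scope classical_set_scope.

Section Inf.
Context {K : numFieldType}.
Implicit Types A B C P Q : imx K.

Lemma lim_ev (u : nat -> K) N c : (forall n, (N <= n)%N -> u n = c) -> limn u = c.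
Proof. move=> H; apply: norm_lim_near_cst; by exists N. Qed.

Lemma imul_sum A B n m N :
  (forall k, (N <= k)%N -> A n k * B k m = 0) ->
  imul A B n m = \sum_(k < N) A n k * B k m.
Proof.
move=> H; rewrite /imul; apply: (@lim_ev _ N) => k Hk.
rewrite /series /= (@big_cat_nat _ _ _ N 0 k _ _ (leq0n N) Hk) /= big_mkord.
rewrite [X in _ + X](_ : _ = 0) ?addr0 //.
rewrite big_nat_cond big1 // => i /andP[/andP[Ni _] _]; exact: H.
Qed.

Definition rowfin A := forall n, exists N, forall k, (N <= k)%N -> A n k = 0.
Definition colfin A := forall m, exists N, forall k, (N <= k)%N -> A k m = 0.

Lemma rowfin_bound A : rowfin A -> forall N, exists N',
  forall k j, (k < N)%N -> (N' <= j)%N -> A k j = 0.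
Proof.
move=> HA; elim=> [|N [N' IH]]; first by exists 0%N.
have [M HM] := HA N; exists (maxn N' M) => k j.
rewrite ltnS leq_eqVlt => /orP[/eqP -> | kN] jb.
  by apply: HM; exact: leq_trans (leq_maxr _ _) jb.
by apply: IH => //; exact: leq_trans (leq_maxl _ _) jb.
Qed.
Arguments rowfin_bound {A}.

Lemma imulA_gen A B C n m N N' :
  (forall k, (N <= k)%N -> A n k = 0) ->
  (forall k j, (k < N)%N -> (N' <= j)%N -> B k j * C j m = 0) ->
  imul (imul A B) C n m = imul A (imul B C) n m.
Proof.
move=> HA HBC.
rewrite (@imul_sum A (imul B C) n m N); last by move=> k /HA ->; rewrite mul0r.
rewrite (@imul_sum (imul A B) C n m N'); last first.
  move=> j Hj; rewrite (@imul_sum A B n j N); last by move=> k /HA ->; rewrite mul0r.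
  rewrite mulr_suml big1 // => k _; by rewrite -mulrA HBC // mulr0.
transitivity (\sum_(j < N') \sum_(k < N) A n k * (B k j * C j m)).
  apply: eq_bigr => j _; rewrite (@imul_sum A B n j N); last by move=> k /HA ->; rewrite mul0r.
  by rewrite mulr_suml; apply: eq_bigr => k _; rewrite mulrA.
rewrite exchange_big; apply: eq_bigr => k _.
rewrite (@imul_sum B C k m N') ?mulr_sumr // => j Hj; exact: HBC.
Qed.

Lemma imulA_rr A B C : rowfin A -> rowfin B -> imul (imul A B) C = imul A (imul B C).
Proof.
move=> HA HB; apply/funext => n; apply/funext => m.
have [N HN] := HA n; have [N' HN'] := rowfin_bound HB N.
by apply: (@imulA_gen _ _ _ _ _ N N') => // k j kN jN; rewrite HN' // mul0r.
Qed.

Lemma imulA_rc A B C : rowfin A -> colfin C -> imul (imul A B) C = imul A (imul B C).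
Proof.
move=> HA HC; apply/funext => n; apply/funext => m.
have [N HN] := HA n; have [N' HN'] := HC m.
by apply: (@imulA_gen _ _ _ _ _ N N') => // k j kN jN; rewrite HN' // mulr0.
Qed.

Arguments imulA_rr {A B C}.
Arguments imulA_rc {A B C}.
Lemma itrK A : itr (itr A) = A. Proof. by []. Qed.

Lemma itr_mul A B : itr (imul A B) = imul (itr B) (itr A).
Proof.
apply/funext => n; apply/funext => m; rewrite /itr /imul.
have -> : (fun k => A m k * B k n) = (fun k => B k n * A m k).
  by apply/funext => k; rewrite mulrC.
by [].
Qed.

Lemma imulA_cc A B C : colfin B -> colfin C -> imul (imul A B) C = imul A (imul B C).
Proof.
move=> HB HC.
rewrite -[LHS]itrK -[RHS]itrK; congr itr.
rewrite !itr_mul imulA_rr //.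
Qed.

Arguments imulA_cc {A B C}.
Lemma rowfinM A B : rowfin A -> rowfin B -> rowfin (imul A B).
Proof.
move=> HA HB n; have [N HN] := HA n; have [N' HN'] := rowfin_bound HB N.
exists N' => j Hj; rewrite (@imul_sum A B n j N); last by move=> k /HN ->; rewrite mul0r.
by rewrite big1 // => k _; rewrite HN' ?mulr0.
Qed.

Arguments rowfinM {A B}.
Lemma colfinM A B : colfin A -> colfin B -> colfin (imul A B).
Proof.
move=> HA HB; have : rowfin (imul (itr B) (itr A)) by apply: rowfinM.
by rewrite -itr_mul.
Qed.

Arguments colfinM {A B}.
Lemma rowfin_itr A : rowfin (itr A) = colfin A. Proof. by []. Qed.
Lemma colfin_itr A : colfin (itr A) = rowfin A. Proof. by []. Qed.

Lemma sum_delta N n (f : nat -> K) : (n < N)%N ->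
  \sum_(k < N) (n == k :> nat)%:R * f k = f n.
Proof.
move=> nN; rewrite (bigD1 (Ordinal nN)) //= eqxx mul1r big1 ?addr0 // => k.
by rewrite -val_eqE /= eq_sym => /negbTE ->; rewrite mul0r.
Qed.

Lemma sum_delta' N n (f : nat -> K) : (n < N)%N ->
  \sum_(k < N) f k * (k == n :> nat)%:R = f n.
Proof.
move=> nN; rewrite -[RHS](@sum_delta N n f nN); apply: eq_bigr => k _.
by rewrite mulrC eq_sym.
Qed.

Lemma imul1l A : imul (@iid K) A = A.
Proof.
apply/funext => n; apply/funext => m.
rewrite (@imul_sum _ _ n m n.+1); first by rewrite /iid (@sum_delta _ n (fun k => A k m)).
move=> k Hk.
by rewrite /iid; case: eqP Hk => [-> | _]; rewrite ?ltnn ?mul0r.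
Qed.

Lemma imul1r A : imul A (@iid K) = A.
Proof.
apply/funext => n; apply/funext => m.
rewrite (@imul_sum _ _ n m m.+1); first by rewrite /iid (@sum_delta' _ m (fun k => A n k)).
move=> k Hk.
by rewrite /iid; case: eqP Hk => [-> | _]; rewrite ?ltnn ?mulr0.
Qed.

Lemma rowfin_iid : rowfin (@iid K).
Proof. move=> n; exists n.+1 => k Hk; rewrite /iid; case: eqP Hk => [->|] //; by rewrite ltnn. Qed.
Lemma colfin_iid : colfin (@iid K).
Proof. move=> n; exists n.+1 => k Hk; rewrite /iid; case: eqP Hk => [->|] //; by rewrite ltnn. Qed.

Lemma rowfin_diag d : rowfin (idiag d).
Proof. move=> n; exists n.+1 => k Hk; rewrite /idiag; case: eqP Hk => [->|] //; by rewrite ltnn. Qed.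
Lemma colfin_diag d : colfin (idiag d).
Proof. move=> n; exists n.+1 => k Hk; rewrite /idiag; case: eqP Hk => [->|] //; by rewrite ltnn. Qed.

Lemma lower_rowfin A : lower_tri A -> rowfin A.
Proof. by move=> HA n; exists n.+1 => k Hk; apply: HA. Qed.

Lemma imul_diagl d A n m : imul (idiag d) A n m = d n * A n m.
Proof.
rewrite (@imul_sum _ _ n m n.+1).
  rewrite -[RHS](@sum_delta n.+1 n (fun k => d k * A k m)) //.
  by apply: eq_bigr => k _; rewrite /idiag; case: eqP => [<-|]; rewrite ?mul1r ?mul0r.
by move=> k Hk; rewrite /idiag; case: eqP Hk => [->|]; rewrite ?ltnn ?mul0r.
Qed.

Lemma imul_diagr d A n m : imul A (idiag d) n m = A n m * d m.
Proof.
rewrite (@imul_sum _ _ n m m.+1).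
  rewrite -[RHS](@sum_delta' m.+1 m (fun k => A n k * d k)) //.
  by apply: eq_bigr => k _; rewrite /idiag; case: eqP => [->|]; rewrite ?mulr1 ?mulr0.
by move=> k Hk; rewrite /idiag; case: eqP Hk => [->|]; rewrite ?ltnn ?mulr0.
Qed.


Lemma rowfin_ipow A j : rowfin A -> rowfin (ipow A j).
Proof. move=> HA; elim: j => [|j IH] /=; [exact: rowfin_iid | exact: rowfinM]. Qed.

Arguments rowfin_ipow {A}.
Lemma ipowSr A j : rowfin A -> ipow A j.+1 = imul (ipow A j) A.
Proof.
move=> HA; elim: j => [|j IH]; first by rewrite /= imul1r imul1l.
have -> : ipow A j.+2 = imul A (ipow A j.+1) by [].
rewrite IH -(imulA_rr HA (rowfin_ipow j HA)); congr imul; exact: IH.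
Qed.

Arguments ipowSr {A}.
Lemma itr_iid : itr (@iid K) = iid K.
Proof. by apply/funext => n; apply/funext => m; rewrite /itr /iid eq_sym. Qed.

Lemma ipow_itr A j : rowfin A -> ipow (itr A) j = itr (ipow A j).
Proof.
move=> HA; elim: j => [|j IH]; first by rewrite /= itr_iid.
by rewrite (ipowSr j HA) itr_mul -IH.
Qed.

Lemma ipoly_itr p A : rowfin A -> ipoly p (itr A) = itr (ipoly p A).
Proof.
move=> HA; apply/funext => n; apply/funext => m; rewrite /ipoly /itr.
by apply: eq_bigr => i _; rewrite ipow_itr.
Qed.

Lemma imul_sumr P d (c : nat -> K) (X : nat -> imx K) : rowfin P ->
  imul P (fun n m => \sum_(i < d) c i * X i n m) =
  fun n m => \sum_(i < d) c i * imul P (X i) n m.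
Proof.
move=> HP; apply/funext => n; apply/funext => m; have [N HN] := HP n.
rewrite (@imul_sum _ _ n m N); last by move=> k /HN ->; rewrite mul0r.
transitivity (\sum_(i < d) c i * \sum_(k < N) P n k * X i k m); last first.
  apply: eq_bigr => i _; rewrite (@imul_sum _ _ n m N) // => k /HN ->.
  by rewrite mul0r.
under eq_bigr do rewrite mulr_sumr.
rewrite exchange_big; apply: eq_bigr => i _; rewrite mulr_sumr.
by apply: eq_bigr => k _; rewrite mulrCA.
Qed.

Lemma imul_suml (Y : nat -> imx K) Q d (c : nat -> K) : (forall i, rowfin (Y i)) ->
  imul (fun n m => \sum_(i < d) c i * Y i n m) Q =
  fun n m => \sum_(i < d) c i * imul (Y i) Q n m.
Proof.
move=> HY; apply/funext => n; apply/funext => m.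
have HYn : rowfin (fun i k => Y i n k) by move=> i; exact: HY.
have [N HN] := rowfin_bound HYn d.
rewrite (@imul_sum _ _ n m N); last first.
  move=> k Hk; rewrite big1 ?mul0r // => i _; by rewrite HN ?mulr0.
transitivity (\sum_(i < d) c i * \sum_(k < N) Y i n k * Q k m); last first.
  apply: eq_bigr => i _; rewrite (@imul_sum _ _ n m N) // => k Hk.
  by rewrite HN ?mul0r.
under eq_bigr do rewrite mulr_suml.
rewrite exchange_big; apply: eq_bigr => i _; rewrite mulr_sumr.
by apply: eq_bigr => k _; rewrite mulrA.
Qed.

Lemma ipow_conj P A Q j : rowfin P -> rowfin A -> rowfin Q ->
  imul P Q = iid K -> imul Q P = iid K ->
  ipow (imul (imul P A) Q) j = imul (imul P (ipow A j)) Q.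
Proof.
move=> HP HA HQ PQ QP; elim: j => [|j IH]; first by rewrite /= imul1r PQ.
have -> : ipow (imul (imul P A) Q) j.+1 =
  imul (imul (imul P A) Q) (ipow (imul (imul P A) Q) j) by [].
rewrite IH.
have HPA := rowfinM HP HA; have HX := rowfin_ipow j HA.
have HPX := rowfinM HP HX.
rewrite (imulA_rr HPA HQ) -(imulA_rr HQ HPX) -(imulA_rr HQ HP) QP imul1l.
rewrite -(imulA_rr HPA HX) (imulA_rr HP HA).
by [].
Qed.


Lemma ipoly_conj p P A Q : rowfin P -> rowfin A -> rowfin Q ->
  imul P Q = iid K -> imul Q P = iid K ->
  ipoly p (imul (imul P A) Q) = imul (imul P (ipoly p A)) Q.
Proof.
move=> HP HA HQ PQ QP; rewrite /ipoly.
rewrite (@imul_sumr P (size p) (fun i => p`_i) (ipow A) HP).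
rewrite (@imul_suml (fun i => imul P (ipow A i)) Q (size p) (fun i => p`_i)); last first.
  by move=> i; apply: rowfinM HP (rowfin_ipow i HA).
apply/funext => n; apply/funext => m; apply: eq_bigr => i _.
by rewrite ipow_conj.
Qed.

Lemma rowfin_ipoly p A : rowfin A -> rowfin (ipoly p A).
Proof.
move=> HA n.
have HYn : rowfin (fun i k => ipow A i n k) by move=> i; exact: rowfin_ipow.
have [N HN] := rowfin_bound HYn (size p).
by exists N => k Hk; rewrite /ipoly big1 // => i _; rewrite HN ?mulr0.
Qed.

Lemma imul_addl A B C : rowfin A -> rowfin B -> imul (iadd A B) C = iadd (imul A C) (imul B C).
Proof.
move=> HA HB; apply/funext => n; apply/funext => m.
have [N1 H1] := HA n; have [N2 H2] := HB n.
rewrite /iadd !(@imul_sum _ _ n m (maxn N1 N2)) -?big_split /=.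
- by apply: eq_bigr => k _; rewrite mulrDl.
- by move=> k Hk; rewrite H2 ?mul0r //; exact: leq_trans (leq_maxr _ _) Hk.
- by move=> k Hk; rewrite H1 ?mul0r //; exact: leq_trans (leq_maxl _ _) Hk.
- move=> k Hk; rewrite H1 ?H2 ?addr0 ?mul0r //.
  + exact: leq_trans (leq_maxr _ _) Hk.
  + exact: leq_trans (leq_maxl _ _) Hk.
Qed.

Lemma rowfin_add A B : rowfin A -> rowfin B -> rowfin (iadd A B).
Proof.
move=> HA HB n; have [N1 H1] := HA n; have [N2 H2] := HB n.
exists (maxn N1 N2) => k Hk; rewrite /iadd H1 ?H2 ?addr0 //.
+ exact: leq_trans (leq_maxr _ _) Hk.
+ exact: leq_trans (leq_maxl _ _) Hk.
Qed.

Lemma itr_add A B : itr (iadd A B) = iadd (itr A) (itr B). Proof. by []. Qed.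

End Inf.
Arguments rowfin_bound {K A}.
Arguments imulA_rr {K A B C}.
Arguments imulA_rc {K A B C}.
Arguments imulA_cc {K A B C}.
Arguments rowfinM {K A B}.
Arguments colfinM {K A B}.
Arguments rowfin_ipow {K A}.
Arguments ipowSr {K A}.

Section Vec.
Context {K : numFieldType}.
Implicit Types A B C P Q Y Z : imx K.

Definition colv (x : nat -> K) : imx K := fun j _ => x j.

Lemma imul_scalr A (c : K) B : rowfin A ->
  imul A (fun n m => c * B n m) = fun n m => c * imul A B n m.
Proof.
move=> HA; apply/funext => n; apply/funext => m; have [N HN] := HA n.
rewrite !(@imul_sum _ _ _ n m N) ?mulr_sumr.
- by apply: eq_bigr => k _; rewrite mulrCA.
- by move=> k /HN ->; rewrite mul0r.
- by move=> k /HN ->; rewrite mul0r.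
Qed.

Lemma imul_addr A B C : rowfin A -> imul A (iadd B C) = iadd (imul A B) (imul A C).
Proof.
move=> HA; apply/funext => n; apply/funext => m; have [N HN] := HA n.
rewrite /iadd !(@imul_sum _ _ _ n m N) -?big_split /=.
- by apply: eq_bigr => k _; rewrite mulrDr.
- by move=> k /HN ->; rewrite mul0r.
- by move=> k /HN ->; rewrite mul0r.
- by move=> k /HN ->; rewrite mul0r.
Qed.

Lemma rowfin_Lam : rowfin (Lam K).
Proof. by move=> n; exists n.+2 => k Hk; rewrite /Lam; case: eqP Hk => [->|] //; rewrite ltnn. Qed.

Lemma imul_Lam_l A n k : imul (Lam K) A n k = A n.+1 k.
Proof.
rewrite (@imul_sum _ _ _ n k n.+2).
  rewrite /Lam; transitivity (\sum_(j < n.+2) A j k * (j == n.+1 :> nat)%:R).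
    by apply: eq_bigr => j _; rewrite mulrC.
  exact: (@sum_delta' _ _ _ (fun j => A j k)).
by move=> j Hj; rewrite /Lam; case: eqP Hj => [->|]; rewrite ?ltnn ?mul0r.
Qed.

Lemma ipow_Lam i n k : ipow (Lam K) i n k = (k == (n + i)%N)%:R.
Proof.
elim: i n => [|i IH] n; first by rewrite /= /iid addn0 eq_sym.
have -> : ipow (Lam K) i.+1 n k = imul (Lam K) (ipow (Lam K) i) n k by [].
by rewrite imul_Lam_l IH addSnnS.
Qed.

Lemma ipoly_Lam_X (p : {poly K}) (t : K) :
  imul (ipoly p (Lam K)) (colv (fun j => t ^+ j)) =
  fun n m => p.[t] * t ^+ n.
Proof.
rewrite /ipoly (@imul_suml _ (ipow (Lam K))); last by move=> i; apply: rowfin_ipow rowfin_Lam.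
apply/funext => n; apply/funext => m.
rewrite horner_coef mulr_suml; apply: eq_bigr => i _; rewrite -mulrA; congr (_ * _).
rewrite (@imul_sum _ _ _ n m (n + i)%N.+1).
  transitivity (\sum_(k < (n + i)%N.+1) (fun k => t ^+ k) k * (k == (n + i)%N :> nat)%:R).
    by apply: eq_bigr => k _; rewrite ipow_Lam mulrC.
  by rewrite sum_delta' // exprD mulrC.
by move=> k Hk; rewrite ipow_Lam; case: eqP Hk => [->|]; rewrite ?ltnn ?mul0r.
Qed.

Lemma pascal_X (t : K) :
  imul (pascal K) (colv (fun j => t ^+ j)) = colv (fun j => (t + 1) ^+ j).
Proof.
apply/funext => n; apply/funext => m.
rewrite (@imul_sum _ _ _ n m n.+1).
  rewrite /colv exprD1n; apply: eq_bigr => k _; by rewrite /pascal mulr_natl.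
by move=> k Hk; rewrite /pascal bin_small ?mul0r.
Qed.

Lemma rowfin_lower A : lower_tri A -> rowfin A.
Proof. by move=> HA n; exists n.+1 => k Hk; apply: HA. Qed.

Lemma pascal_lower : lower_tri (pascal K).
Proof. by move=> n m Hnm; rewrite /pascal bin_small. Qed.

Definition Xb (b : bool) (t : K) (m : nat) : K := if odd m == b then t ^+ m./2 else 0.
Definition Lb (b : bool) : imx K := fun n k => (k == n.+2)%:R * (odd k == b)%:R.
Definition pascalb (b : bool) : imx K :=
  fun n m => if (odd n == b) && (odd m == b) then 'C(n./2, m./2)%:R else 0.
Definition supp (c : bool) Y := forall k m, odd k != c -> Y k m = 0.

Lemma X1E t : X1 t = Xb false t.
Proof. by apply/funext => m; rewrite /X1 /Xb; case: (odd m). Qed.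
Lemma X2E t : X2 t = Xb true t.
Proof. by apply/funext => m; rewrite /X2 /Xb; case: (odd m). Qed.

Lemma Lam1E : Lam1 K = Lb false.
Proof.
apply/funext => n; apply/funext => k.
rewrite /Lam1 /I1 imul_diagr imul_Lam_l /Lam /Lb; by case: (odd k).
Qed.
Lemma Lam2E : Lam2 K = Lb true.
Proof.
apply/funext => n; apply/funext => k.
rewrite /Lam2 /I2 imul_diagr imul_Lam_l /Lam /Lb; by case: (odd k).
Qed.
Lemma pascal1E : pascal1 K = pascalb false.
Proof.
apply/funext => n; apply/funext => k.
by rewrite /pascal1 /pascalb; case: (odd n); case: (odd k).
Qed.
Lemma pascal2E : pascal2 K = pascalb true.
Proof.
apply/funext => n; apply/funext => k.
by rewrite /pascal2 /pascalb; case: (odd n); case: (odd k).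
Qed.

Lemma rowfin_Lb b : rowfin (Lb b).
Proof. by move=> n; exists n.+3 => k Hk; rewrite /Lb; case: eqP Hk => [->|]; rewrite ?ltnn ?mul0r. Qed.

Lemma imul_Lb b A n m : imul (Lb b) A n m = (odd n == b)%:R * A n.+2 m.
Proof.
rewrite (@imul_sum _ _ _ n m n.+3).
  transitivity (\sum_(k < n.+3) (n.+2 == k :> nat)%:R * (fun k => (odd k == b)%:R * A k m) k).
    by apply: eq_bigr => k _; rewrite /Lb -mulrA eq_sym.
  by rewrite (@sum_delta _ _ _ (fun k => (odd k == b)%:R * A k m)) //= negbK.
by move=> k Hk; rewrite /Lb; case: eqP Hk => [->|]; rewrite ?ltnn ?mul0r.
Qed.

Lemma Lb_supp b c Y : supp c Y -> supp c (imul (Lb b) Y).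
Proof.
move=> HY k m Hk; rewrite imul_Lb HY ?mulr0 //=; by rewrite negbK.
Qed.

Lemma ipow_Lb_supp b c Y i : supp c Y -> supp c (imul (ipow (Lb b) i) Y).
Proof.
move=> HY; elim: i => [|i IH]; first by rewrite imul1l.
have -> : ipow (Lb b) i.+1 = imul (Lb b) (ipow (Lb b) i) by [].
rewrite (imulA_rr (rowfin_Lb b) (rowfin_ipow i (rowfin_Lb b))).
exact: Lb_supp.
Qed.

Lemma ipoly_Lb_supp b c Y (p : {poly K}) : supp c Y -> supp c (imul (ipoly p (Lb b)) Y).
Proof.
move=> HY; rewrite /ipoly (@imul_suml _ (ipow (Lb b))); last first.
  by move=> i; apply: rowfin_ipow (rowfin_Lb b).
move=> k m Hk /=; rewrite big1 // => i _; by rewrite (@ipow_Lb_supp b c Y i HY k m Hk) mulr0.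
Qed.

Lemma Lb_Xb b t : imul (Lb b) (colv (Xb b t)) = fun n m => t * Xb b t n.
Proof.
apply/funext => n; apply/funext => m; rewrite imul_Lb /colv /Xb /=.
rewrite negbK; case: eqP => _; last by rewrite !mul0r mulr0.
by rewrite mul1r exprS.
Qed.

Lemma ipow_Lb_Xb b t i : imul (ipow (Lb b) i) (colv (Xb b t)) = fun n m => t ^+ i * Xb b t n.
Proof.
elim: i => [|i IH]; first by rewrite imul1l; apply/funext => n; apply/funext => m; rewrite mul1r.
have -> : ipow (Lb b) i.+1 = imul (Lb b) (ipow (Lb b) i) by [].
rewrite (imulA_rr (rowfin_Lb b) (rowfin_ipow i (rowfin_Lb b))) IH.
rewrite (@imul_scalr (Lb b) (t ^+ i) (fun n m => Xb b t n) (rowfin_Lb b)).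
have -> : (fun n m => Xb b t n) = colv (Xb b t) by [].
rewrite Lb_Xb; apply/funext => n; apply/funext => m.
by rewrite exprS mulrA [t ^+ i * t]mulrC.
Qed.

Lemma ipoly_Lb_Xb b t (p : {poly K}) :
  imul (ipoly p (Lb b)) (colv (Xb b t)) = fun n m => p.[t] * Xb b t n.
Proof.
rewrite /ipoly (@imul_suml _ (ipow (Lb b))); last first.
  by move=> i; apply: rowfin_ipow (rowfin_Lb b).
apply/funext => n; apply/funext => m.
rewrite horner_coef mulr_suml; apply: eq_bigr => i _.
by rewrite ipow_Lb_Xb mulrA.
Qed.

Lemma sum_pair (f : nat -> K) N :
  \sum_(k < N.*2) f k = \sum_(i < N) (f i.*2 + f i.*2.+1).
Proof.
elim: N => [|N IH]; first by rewrite !big_ord0.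
by rewrite doubleS !big_ord_recr /= IH addrA.
Qed.

Lemma pascalb_supp b Z : supp (~~ b) Z -> imul (pascalb b) Z = fun _ _ => 0.
Proof.
move=> HZ; apply/funext => n; apply/funext => m.
rewrite (@imul_sum _ _ _ n m 0) ?big_ord0 // => k _.
rewrite /pascalb; case: eqP => _ /=; last by rewrite mul0r.
case: eqP => Hk; last by rewrite mul0r.
by rewrite HZ ?mulr0 // Hk; case: (b).
Qed.

Lemma pascalb_Xb b t : imul (pascalb b) (colv (Xb b t)) = colv (Xb b (t + 1)).
Proof.
apply/funext => n; apply/funext => m.
case: (boolP (odd n == b)) => Hn; last first.
  rewrite (@imul_sum _ _ _ n m 0) ?big_ord0 /colv /Xb ?(negbTE Hn) // => k _.
  by rewrite /pascalb (negbTE Hn) mul0r.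
set a := n./2.
rewrite (@imul_sum _ _ _ n m (a.+1).*2).
  rewrite (sum_pair (fun k => pascalb b n k * colv (Xb b t) k m)) /colv /Xb Hn exprD1n; apply: eq_bigr => i _.
  rewrite /pascalb Hn /= odd_double /= uphalf_double doubleK.
  by case: b Hn => _ /=; rewrite ?mul0r ?add0r ?addr0 mulr_natl.
move=> k Hk; rewrite /pascalb Hn /=; case: ifP => _; last by rewrite mul0r.
rewrite bin_small ?mul0r //.
by move: (half_leq Hk); rewrite doubleK.
Qed.

Lemma Xb_supp b t : supp b (colv (Xb b t)).
Proof. by move=> k m Hk; rewrite /colv /Xb (negbTE Hk). Qed.

Lemma pascalb_lower b : lower_tri (pascalb b).
Proof.
move=> n m Hnm; rewrite /pascalb; case: ifP => // /andP[/eqP Hn /eqP Hm].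
rewrite bin_small //.
move: Hnm; rewrite leq_eqVlt => /orP[/eqP Em | H2].
  by move: Hm; rewrite -Em /= Hn; case: (b).
by move: (half_leq H2).
Qed.

End Vec.

Section RS.
Context {K : numFieldType}.
Implicit Types A B C P Q Y Z F : imx K.

Definition rs (x y : nat -> nat -> K) F :=
  forall j m, series (fun t => x t j * y t m) @ \oo --> F j m.

Lemma cvg_fsum N (f : nat -> nat -> K) (l : nat -> K) :
  (forall k, f k @ \oo --> l k) ->
  (fun t => \sum_(k < N) f k t) @ \oo --> \sum_(k < N) l k.
Proof.
move=> Hf; elim: N => [|N IH].
  have -> : (fun t => \sum_(k < 0) f k t) = (fun _ => 0).
    by apply/funext => t; rewrite big_ord0.
  by rewrite big_ord0; apply: cvg_cst.
have -> : (fun t => \sum_(k < N.+1) f k t) =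
  (fun t => \sum_(k < N) f k t) + (fun t => f N t).
  by apply/funext => t; rewrite big_ord_recr.
by rewrite big_ord_recr; apply: cvgD.
Qed.

Lemma rs_left A x y F : rowfin A -> rs x y F ->
  rs (fun t n => imul A (colv (x t)) n 0) y (imul A F).
Proof.
move=> HA HF n m; have [N HN] := HA n.
rewrite (@imul_sum _ _ _ n m N); last by move=> k /HN ->; rewrite mul0r.
have E : forall t, imul A (colv (x t)) n 0 = \sum_(k < N) A n k * x t k.
  by move=> t; rewrite (@imul_sum _ _ _ n 0 N) // => k /HN ->; rewrite mul0r.
have -> : series (fun t => imul A (colv (x t)) n 0 * y t m) =
   (fun T => \sum_(k < N) A n k * series (fun t => x t k * y t m) T).
  apply/funext => T; rewrite /series /=.
  under eq_bigr do rewrite E mulr_suml.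
  rewrite exchange_big; apply: eq_bigr => k _; rewrite mulr_sumr.
  by apply: eq_bigr => t _; rewrite mulrA.
apply: (@cvg_fsum N (fun k T => A n k * series (fun t => x t k * y t m) T) (fun k => A n k * F k m)) => k; exact: cvgMl_tmp.
Qed.

Lemma rs_sym x y F : rs x y F -> rs y x (itr F).
Proof.
move=> H j m; have -> : (fun t => y t j * x t m) = (fun t => x t m * y t j).
  by apply/funext => t; rewrite mulrC.
exact: H.
Qed.

Lemma rs_right B x y F : colfin B -> rs x y F ->
  rs x (fun t m => imul (itr B) (colv (y t)) m 0) (imul F B).
Proof.
move=> HB HF; have := @rs_left (itr B) _ _ _ HB (@rs_sym _ _ _ HF).
by rewrite -itr_mul => /(@rs_sym _ _ _).
Qed.

End RS.

Section Key.
Context {K : numFieldType}.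
Implicit Types A B C P Q Y Z F : imx K.

Definition Qp (s1 s2 : {poly K}) : imx K :=
  iadd (imul (pascal1 K) (ipoly s1 (Lam1 K))) (imul (pascal2 K) (ipoly s2 (Lam2 K))).

Lemma block b (p : {poly K}) (s c d : K) V :
  (forall n m, V n m = c * Xb b s n + d * Xb (~~ b) s n) ->
  imul (imul (pascalb b) (ipoly p (Lb b))) V = fun n m => c * (p.[s] * Xb b (s + 1) n).
Proof.
move=> HV.
have -> : V = iadd (fun n m => c * colv (Xb b s) n m) (fun n m => d * colv (Xb (~~ b) s) n m).
  by apply/funext => n; apply/funext => m; rewrite HV.
have HP : rowfin (pascalb b : imx K) by apply: rowfin_lower; apply: pascalb_lower.
have HE : rowfin (ipoly p (Lb b)) := rowfin_ipoly p (Lb b) (rowfin_Lb b).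
rewrite (imulA_rr HP HE) (imul_addr _ _ _ HE).
rewrite (imul_scalr _ c (colv (Xb b s)) HE) (imul_scalr _ d (colv (Xb (~~ b) s)) HE).
rewrite ipoly_Lb_Xb.
have HZ : supp (~~ b) (imul (ipoly p (Lb b)) (colv (Xb (~~ b) s))).
  apply: ipoly_Lb_supp; exact: Xb_supp.
rewrite (imul_addr _ _ _ HP).
rewrite (imul_scalr _ c (fun n m => p.[s] * Xb b s n) HP).
rewrite (imul_scalr _ d (imul (ipoly p (Lb b)) (colv (Xb (~~ b) s))) HP).
rewrite (@pascalb_supp _ b _ HZ).
rewrite (imul_scalr _ p.[s] (colv (Xb b s)) HP) pascalb_Xb.
by apply/funext => n; apply/funext => m; rewrite /iadd /colv mulr0 addr0.
Qed.


Lemma rowfin_Qp s1 s2 : rowfin (Qp s1 s2).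
Proof.
apply: rowfin_add; apply: rowfinM.
- by rewrite pascal1E; apply: rowfin_lower; apply: pascalb_lower.
- by apply: rowfin_ipoly; rewrite Lam1E; apply: rowfin_Lb.
- by rewrite pascal2E; apply: rowfin_lower; apply: pascalb_lower.
- by apply: rowfin_ipoly; rewrite Lam2E; apply: rowfin_Lb.
Qed.

Lemma Qp_v s1 s2 (s c1 c2 : K) :
  imul (Qp s1 s2) (colv (fun k => c1 * X1 s k + c2 * X2 s k)) =
  fun n m => c1 * (s1.[s] * X1 (s + 1) n) + c2 * (s2.[s] * X2 (s + 1) n).
Proof.
have H1 : rowfin (imul (pascal1 K) (ipoly s1 (Lam1 K))).
  apply: rowfinM.
  - by rewrite pascal1E; apply: rowfin_lower; apply: pascalb_lower.
  - by apply: rowfin_ipoly; rewrite Lam1E; apply: rowfin_Lb.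
have H2 : rowfin (imul (pascal2 K) (ipoly s2 (Lam2 K))).
  apply: rowfinM.
  - by rewrite pascal2E; apply: rowfin_lower; apply: pascalb_lower.
  - by apply: rowfin_ipoly; rewrite Lam2E; apply: rowfin_Lb.
rewrite /Qp (imul_addl _ _ _ H1 H2) Lam1E Lam2E pascal1E pascal2E.
rewrite (@block false s1 s c1 c2); last by move=> n m; rewrite /colv X1E X2E.
rewrite (@block true s2 s c2 c1); last by move=> n m; rewrite /colv X1E X2E addrC.
by apply/funext => n; apply/funext => m; rewrite /iadd X1E X2E.
Qed.

Lemma key (w1 w2 : nat -> K) (th s1 s2 : {poly K}) :
  (forall n m, cvgn (series (moment_term w1 w2 n m))) ->
  (forall k, th.[(k.+1)%:R] * w1 k.+1 = s1.[k%:R] * w1 k) ->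
  (forall k, th.[(k.+1)%:R] * w2 k.+1 = s2.[k%:R] * w2 k) ->
  th.[0] = 0 ->
  imul (ipoly th (Lam K)) (moment w1 w2) =
  imul (pascal K) (imul (moment w1 w2) (itr (Qp s1 s2))).
Proof.
move=> Hc P1 P2 T0.
pose xr := fun (t j : nat) => (t%:R : K) ^+ j.
pose vr := fun (t m : nat) => w1 t * X1 (t%:R : K) m + w2 t * X2 (t%:R : K) m.
have HM : rs xr vr (moment w1 w2) by move=> j m; exact: (Hc j m).
have HL := @rs_left _ _ _ _ _ (rowfin_ipoly th (Lam K) rowfin_Lam) HM.
have HR := @rs_left _ _ _ _ _ (@rowfin_lower _ _ pascal_lower) (@rs_right _ (itr (Qp s1 s2)) _ _ _ (rowfin_Qp s1 s2) HM).
apply/funext => n; apply/funext => m.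
pose fL := fun t : nat => th.[t%:R] * (t%:R : K) ^+ n * vr t m.
pose fR := fun t : nat => (t.+1%:R : K) ^+ n *
  (w1 t * (s1.[t%:R] * X1 (t.+1%:R : K) m) + w2 t * (s2.[t%:R] * X2 (t.+1%:R : K) m)).
have eL : (fun t => imul (ipoly th (Lam K)) (colv (xr t)) n 0 * vr t m) = fL.
  by apply/funext => t; rewrite /xr ipoly_Lam_X.
have eR : (fun t => imul (pascal K) (colv (xr t)) n 0 *
             imul (itr (itr (Qp s1 s2))) (colv (vr t)) m 0) = fR.
  apply/funext => t; rewrite /xr /vr pascal_X itrK Qp_v /colv /fR -mulrSr.
  by [].
have HL' := HL n m; rewrite eL in HL'.
have HR' := HR n m; rewrite eR in HR'.
have eS : series fR = (fun T => series fL T.+1).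
  apply/funext => T; rewrite /series /= big_nat_recl //.
  rewrite {1}/fL mulr0n T0 !mul0r add0r; apply: eq_bigr => t _.
  rewrite /fL /fR /vr.
  transitivity ((t.+1%:R : K) ^+ n * ((th.[(t.+1)%:R] * w1 t.+1) * X1 (t.+1%:R : K) m +
     (th.[(t.+1)%:R] * w2 t.+1) * X2 (t.+1%:R : K) m)); first by rewrite P1 P2; ring.
  rewrite /fL /vr; ring.
rewrite eS in HR'.
have HR2 : series fL @ \oo --> imul (pascal K) (imul (moment w1 w2) (itr (Qp s1 s2))) n m.
  by move: HR'; rewrite (cvg_shiftS (series fL)).
by rewrite -(norm_cvg_lim HL') (norm_cvg_lim HR2).
Qed.
End Key.

Section Fin.
Context {K : numFieldType}.
Implicit Types A B C P Q Y Z F S Si St Sti : imx K.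

Lemma conj_mul P A B Q : rowfin P -> rowfin A -> rowfin B -> rowfin Q ->
  imul Q P = iid K ->
  imul (imul (imul P A) Q) (imul (imul P B) Q) = imul (imul P (imul A B)) Q.
Proof.
move=> HP HA HB HQ QP.
have HPA := rowfinM HP HA; have HPB := rowfinM HP HB.
rewrite (imulA_rr HPA HQ) -(imulA_rr HQ HPB) -(imulA_rr HQ HP) QP imul1l.
by rewrite -(imulA_rr HPA HB) (imulA_rr HP HA).
Qed.

Lemma diag_one S Si : lower_unitri S -> is_inv_lt S Si -> forall n, Si n n = 1.
Proof.
move=> [LS DS] [LSi [SSi _]] n.
have := congr1 (fun M => M n n) SSi; rewrite /= /iid eqxx.
rewrite (@imul_sum _ _ _ n n n.+1); last by move=> k Hk; rewrite LS ?mul0r.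
rewrite big_ord_recr /= big1 ?add0r ?DS ?mul1r // => k _.
by rewrite LSi ?mulr0.
Qed.

Lemma lead_G Si Sti h N : lower_tri Si ->
  lead_block (imul (imul Si (idiag h)) (itr Sti)) N =
  lead_block Si N *m diag_mx (\row_(i < N) h i) *m (lead_block Sti N)^T.
Proof.
move=> LSi; apply/matrixP => i j; rewrite mul_mx_diag !mxE.
rewrite (@imul_sum _ _ _ i j N).
  by apply: eq_bigr => k _; rewrite imul_diagr !mxE.
move=> k Hk; rewrite imul_diagr LSi ?mul0r //.
exact: leq_trans (ltn_ord i) Hk.
Qed.

Lemma h_nz S St Si Sti h : lower_unitri S -> lower_unitri St ->
  is_inv_lt S Si -> is_inv_lt St Sti ->
  (forall N, \det (lead_block (imul (imul Si (idiag h)) (itr Sti)) N) != 0) ->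
  forall n, h n != 0.
Proof.
move=> uS uSt iS iSt Hdet n; have := Hdet n.+1.
have [LSi _] := iS; have [LSti _] := iSt.
rewrite lead_G // !det_mulmx det_tr det_diag !det_trig.
- rewrite [X in X * _ * _](eq_bigr (fun _ => 1)); last by move=> i _; rewrite /lead_block mxE (@diag_one S Si uS iS).
  rewrite [X in _ * X](eq_bigr (fun _ => 1)); last by move=> i _; rewrite /lead_block mxE (@diag_one St Sti uSt iSt).
  rewrite !big1_eq mul1r mulr1.
  by rewrite big_ord_recr /= mxE mulf_eq0 negb_or => /andP[_].
- by apply/is_trig_mxP => i j ij; rewrite /lead_block mxE LSti.
- by apply/is_trig_mxP => i j ij; rewrite /lead_block mxE LSi.
Qed.

End Fin.

Lemma itr_diag {K : numFieldType} (d : nat -> K) : itr (idiag d) = idiag d.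
Proof.
apply/funext => n; apply/funext => m; rewrite /itr /idiag eq_sym.
by case: eqP => [->|].
Qed.

Opaque imul ipoly.
Theorem main_gen {K : numFieldType} (w1 w2 : nat -> K)
  (theta sigma1 sigma2 : {poly K})
  (S St Si Sti : imx K) (h : nat -> K) (Linv : imx K) :
  (forall n m, cvgn (series (moment_term w1 w2 n m))) ->
  (forall N, \det (lead_block (moment w1 w2) N) != 0) ->
  lower_unitri S -> lower_unitri St ->
  is_inv_lt S Si -> is_inv_lt St Sti ->
  moment w1 w2 = imul (imul Si (idiag h)) (itr Sti) ->
  is_inv_lt (pascal _) Linv ->
  (forall k, theta.[(k.+1)%:R] * w1 k.+1 = sigma1.[k%:R] * w1 k) ->
  (forall k, theta.[(k.+1)%:R] * w2 k.+1 = sigma2.[k%:R] * w2 k) ->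
  theta.[0] = 0 ->
  let H := idiag h in
  let Hinv := idiag (fun n => (h n)^-1) in
  let T := imul (imul S (Lam _)) Si in
  let T1 := imul (imul (imul (imul Hinv St) (Lam1 _)) Sti) H in
  let T2 := imul (imul (imul (imul Hinv St) (Lam2 _)) Sti) H in
  let Piinv := imul (imul S Linv) Si in
  let Pi1 := imul (imul (imul (imul Hinv St) (pascal1 _)) Sti) H in
  let Pi2 := imul (imul (imul (imul Hinv St) (pascal2 _)) Sti) H in
  imul Piinv (ipoly theta T) =
  iadd (imul (ipoly sigma1 (itr T1)) (itr Pi1))
       (imul (ipoly sigma2 (itr T2)) (itr Pi2)).
Proof.
move=> Hc Hdet uS uSt iS iSt HG iL P1 P2 T0.
move=> H Hinv T T1 T2 Piinv Pi1 Pi2.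
have [LS DS] := uS; have [LSt DSt] := uSt.
have [LSi [SSi SiS]] := iS; have [LSti [StSti StiSt]] := iSt.
have [LLinv [LLi LiL]] := iL.
have hnz : forall n, h n != 0.
  by apply: (@h_nz _ S St Si Sti) => // N; rewrite -HG.
have KEY := @key _ w1 w2 theta sigma1 sigma2 Hc P1 P2 T0.
rewrite HG -/H in KEY.
have [G eG] : {G | G = imul (imul Si H) (itr Sti)} by exists (imul (imul Si H) (itr Sti)).
rewrite -eG in KEY.
have rS : rowfin S by apply: rowfin_lower.
have rSi : rowfin Si by apply: rowfin_lower.
have rSt : rowfin St by apply: rowfin_lower.
have rSti : rowfin Sti by apply: rowfin_lower.
have rLinv : rowfin Linv by apply: rowfin_lower.
have rL : rowfin (pascal K) by apply: rowfin_lower; apply: pascal_lower.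
have rH : rowfin H by apply: rowfin_diag.
have rHinv : rowfin Hinv by apply: rowfin_diag.
have rLam : rowfin (Lam K) by apply: rowfin_Lam.
have rLam1 : rowfin (Lam1 K) by rewrite Lam1E; apply: rowfin_Lb.
have rLam2 : rowfin (Lam2 K) by rewrite Lam2E; apply: rowfin_Lb.
have rP1 : rowfin (pascal1 K) by rewrite pascal1E; apply: rowfin_lower; apply: pascalb_lower.
have rP2 : rowfin (pascal2 K) by rewrite pascal2E; apply: rowfin_lower; apply: pascalb_lower.
have HHinv : imul Hinv H = iid K.
  apply/funext => n; apply/funext => m; rewrite imul_diagl /H /idiag /iid.
  by case: eqP => [->|]; rewrite ?mulVf ?mulr0 // hnz.
have HinvH : imul H Hinv = iid K.
  apply/funext => n; apply/funext => m; rewrite imul_diagl /Hinv /idiag /iid.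
  by case: eqP => [->|]; rewrite ?mulfV ?mulr0 // hnz.
have itrH : itr H = H by rewrite /H itr_diag.
have [P eP] : {P | P = imul Hinv St} by exists (imul Hinv St).
have [Q eQ] : {Q | Q = imul Sti H} by exists (imul Sti H).
have rP : rowfin P by rewrite eP; apply: rowfinM.
have rQ : rowfin Q by rewrite eQ; apply: rowfinM.
have PQ : imul P Q = iid K.
  rewrite eP eQ (imulA_rr rHinv rSt) -(imulA_rr rSt rSti) StSti imul1l.
  exact: HHinv.
have QP : imul Q P = iid K.
  rewrite eP eQ (imulA_rr rSti rH) -(imulA_rr rH rHinv) HinvH imul1l.
  exact: StiSt.
have eT : T = imul (imul S (Lam K)) Si by [].
have ePiinv : Piinv = imul (imul S Linv) Si by [].
have eT1 : T1 = imul (imul P (Lam1 K)) Q.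
  by rewrite eP eQ -(imulA_rr (rowfinM (rowfinM rHinv rSt) rLam1) rSti).
have eT2 : T2 = imul (imul P (Lam2 K)) Q.
  by rewrite eP eQ -(imulA_rr (rowfinM (rowfinM rHinv rSt) rLam2) rSti).
have ePi1 : Pi1 = imul (imul P (pascal1 K)) Q.
  by rewrite eP eQ -(imulA_rr (rowfinM (rowfinM rHinv rSt) rP1) rSti).
have ePi2 : Pi2 = imul (imul P (pascal2 K)) Q.
  by rewrite eP eQ -(imulA_rr (rowfinM (rowfinM rHinv rSt) rP2) rSti).
have eitrQ : itr Q = imul H (itr Sti) by rewrite eQ (itr_mul Sti H) itrH.
clearbody T T1 T2 Piinv Pi1 Pi2.
have rT1 : rowfin T1 by rewrite eT1; apply: rowfinM => //; apply: rowfinM.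
have rT2 : rowfin T2 by rewrite eT2; apply: rowfinM => //; apply: rowfinM.
have rE1 : rowfin (ipoly sigma1 (Lam1 K)) by apply: rowfin_ipoly.
have rE2 : rowfin (ipoly sigma2 (Lam2 K)) by apply: rowfin_ipoly.
have rTh : rowfin (ipoly theta (Lam K)) by apply: rowfin_ipoly.
rewrite (ipoly_itr sigma1 T1 rT1) (ipoly_itr sigma2 T2 rT2).
rewrite -(itr_mul Pi1 (ipoly sigma1 T1)) -(itr_mul Pi2 (ipoly sigma2 T2)).
rewrite -(itr_add (imul Pi1 (ipoly sigma1 T1)) (imul Pi2 (ipoly sigma2 T2))).
rewrite eT1 eT2 ePi1 ePi2.
rewrite (ipoly_conj sigma1 P (Lam1 K) Q rP rLam1 rQ PQ QP).
rewrite (ipoly_conj sigma2 P (Lam2 K) Q rP rLam2 rQ PQ QP).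
rewrite (conj_mul P (pascal1 K) (ipoly sigma1 (Lam1 K)) Q rP rP1 rE1 rQ QP).
rewrite (conj_mul P (pascal2 K) (ipoly sigma2 (Lam2 K)) Q rP rP2 rE2 rQ QP).
rewrite -(imul_addl (imul P (imul (pascal1 K) (ipoly sigma1 (Lam1 K))))
                    (imul P (imul (pascal2 K) (ipoly sigma2 (Lam2 K)))) Q
                    (rowfinM rP (rowfinM rP1 rE1)) (rowfinM rP (rowfinM rP2 rE2))).
rewrite -(imul_addr P (imul (pascal1 K) (ipoly sigma1 (Lam1 K)))
                      (imul (pascal2 K) (ipoly sigma2 (Lam2 K))) rP).
rewrite -/(Qp sigma1 sigma2).
rewrite ePiinv eT (ipoly_conj theta S (Lam K) Si rS rLam rSi SSi SiS).
rewrite (conj_mul S Linv (ipoly theta (Lam K)) Si rS rLinv rTh rSi SiS).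
have [W eW] : {W | W = imul Linv (ipoly theta (Lam K))} by exists (imul Linv (ipoly theta (Lam K))).
rewrite -eW.
have rW : rowfin W by rewrite eW; apply: rowfinM.
have rQp := rowfin_Qp sigma1 sigma2.
have e1 : itr (imul (imul P (Qp sigma1 sigma2)) Q) =
    imul (itr Q) (imul (itr (Qp sigma1 sigma2)) (itr P)).
  by rewrite (itr_mul (imul P (Qp sigma1 sigma2)) Q) (itr_mul P (Qp sigma1 sigma2)).
have e2 : imul (itr Q) (itr P) = iid K by rewrite -(itr_mul P Q) PQ itr_iid.
have cQ : colfin (itr Q) := rQ.
have cP : colfin (itr P) := rP.
have cQp : colfin (itr (Qp sigma1 sigma2)) := rQp.
have cSti : colfin (itr Sti) := rSti.
have eSG : imul S G = itr Q.
  rewrite eG -(imulA_rc rS cSti) -(imulA_rr rS rSi) SSi imul1l.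
  by rewrite eitrQ.
have eWG : imul W G = imul G (itr (Qp sigma1 sigma2)).
  by rewrite eW (imulA_rr rLinv rTh) KEY -(imulA_rr rLinv rL) LiL imul1l.
have eXQ : imul (imul (imul S W) Si) (itr Q) = imul (itr Q) (itr (Qp sigma1 sigma2)).
  rewrite {1}eitrQ (imulA_rr (rowfinM rS rW) rSi) -(imulA_rr rSi rH) -eG.
  rewrite (imulA_rr rS rW) eWG -(imulA_rc rS cQp) eSG.
  by [].
rewrite e1 -[LHS]imul1r -e2 -(imulA_cc cQ cP) eXQ (imulA_cc cQp cP).
by [].
Qed.

Section Cplx.
Variable R : realType.
Local Notation C := (cplx R).
Local Notation cRe := (@complex.Re R).
Local Notation cIm := (@complex.Im R).

Lemma ReD (x y : C) : cRe (x + y) = cRe x + cRe y. Proof. by destruct x; destruct y. Qed.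
Lemma ImD (x y : C) : cIm (x + y) = cIm x + cIm y. Proof. by destruct x; destruct y. Qed.
Lemma ReB (x y : C) : cRe (x - y) = cRe x - cRe y. Proof. by destruct x; destruct y. Qed.
Lemma ImB (x y : C) : cIm (x - y) = cIm x - cIm y. Proof. by destruct x; destruct y. Qed.

Definition nr (z : C) : R := Num.sqrt (cRe z ^+ 2 + cIm z ^+ 2).

Lemma normC_nr (z : C) : `|z| = (nr z)%:C%C.
Proof. exact: normc_def. Qed.

Lemma Re_le_nr (z : C) : `|cRe z| <= nr z.
Proof.
rewrite /nr -sqrtr_sqr. apply: ler_wsqrtr. rewrite lerDl. exact: sqr_ge0.
Qed.
Lemma Im_le_nr (z : C) : `|cIm z| <= nr z.
Proof.
rewrite /nr -sqrtr_sqr. apply: ler_wsqrtr. rewrite lerDr. exact: sqr_ge0.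
Qed.

Lemma nr_le (z : C) : nr z <= `|cRe z| + `|cIm z|.
Proof.
have h0 : 0 <= `|cRe z| + `|cIm z| by apply: addr_ge0.
rewrite /nr -[X in _ <= X]ger0_norm; last exact: h0.
rewrite -sqrtr_sqr. apply: ler_wsqrtr.
rewrite sqrrD !real_normK ?num_real // addrAC lerDl.
apply: mulrn_wge0. apply: mulr_ge0; exact: normr_ge0.
Qed.

Lemma Re_cvg (s : nat -> C) (l : C) :
  s n @[n --> \oo] --> l -> cRe (s n) @[n --> \oo] --> cRe l.
Proof.
move/cvgrPdist_lt => H; apply/cvgrPdist_lt => e e0.
have e0' : 0 < (e%:C%C : C) by rewrite ltcR.
apply: filterS (H _ e0') => n.
rewrite normC_nr ltcR -ReB; exact: le_lt_trans (Re_le_nr _).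
Qed.

Lemma Im_cvg (s : nat -> C) (l : C) :
  s n @[n --> \oo] --> l -> cIm (s n) @[n --> \oo] --> cIm l.
Proof.
move/cvgrPdist_lt => H; apply/cvgrPdist_lt => e e0.
have e0' : 0 < (e%:C%C : C) by rewrite ltcR.
apply: filterS (H _ e0') => n.
rewrite normC_nr ltcR -ImB; exact: le_lt_trans (Im_le_nr _).
Qed.

Lemma cvg_ReIm (s : nat -> C) (a b : R) :
  cRe (s n) @[n --> \oo] --> a -> cIm (s n) @[n --> \oo] --> b ->
  s n @[n --> \oo] --> ((a +i* b)%C : C).
Proof.
move=> /cvgrPdist_lt Ha /cvgrPdist_lt Hb; apply/cvgrPdist_lt => eps eps0.
have [Hi Hr] : cIm eps = 0 /\ 0 < cRe eps.
  by move: eps0; rewrite ltcE => /andP[/eqP -> ->].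
have e2 : 0 < cRe eps / 2 by rewrite divr_gt0.
apply: filterS2 (Ha _ e2) (Hb _ e2) => n h1 h2.
have -> : eps = ((cRe eps)%:C%C : C).
  by move: Hi; destruct eps => /= ->.
rewrite normC_nr ltcR. apply: le_lt_trans (nr_le _) _.
rewrite ReB ImB /= [cRe eps]splitr; exact: ltrD.
Qed.

Lemma Re_series (u : nat -> C) n : cRe (series u n) = series (fun k => cRe (u k)) n.
Proof.
rewrite /series /=; elim: n => [|n IH]; first by rewrite !big_geq.
by rewrite !big_nat_recr //= ReD IH.
Qed.

Lemma Im_series (u : nat -> C) n : cIm (series u n) = series (fun k => cIm (u k)) n.
Proof.
rewrite /series /=; elim: n => [|n IH]; first by rewrite !big_geq.
by rewrite !big_nat_recr //= ImD IH.
Qed.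

Lemma abs_cvg (u : nat -> C) :
  cvgn (series (fun k => `|u k|)) -> cvgn (series u).
Proof.
move=> H.
have Hs : forall n, cRe (series (fun k => `|u k|) n) = series (fun k => nr (u k)) n.
  by move=> n; rewrite Re_series; apply: eq_bigr => k _; rewrite normC_nr.
have Hn : cvgn (series (fun k => nr (u k))).
  have := @Re_cvg _ _ H; rewrite (@eq_cvg _ _ \oo _ _ _ Hs) ; exact: cvgP.
have HRe : cvgn (series (fun k => cRe (u k))).
  apply: normed_cvg; apply: (@series_le_cvg _ _ (fun k => nr (u k))) => //.
  - by move=> k; apply: normr_ge0.
  - by move=> k; apply: sqrtr_ge0.
  - by move=> k; apply: Re_le_nr.
have HIm : cvgn (series (fun k => cIm (u k))).
  apply: normed_cvg; apply: (@series_le_cvg _ _ (fun k => nr (u k))) => //.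
  - by move=> k; apply: normr_ge0.
  - by move=> k; apply: sqrtr_ge0.
  - by move=> k; apply: Im_le_nr.
apply: cvgP; apply: cvg_ReIm.
- rewrite (@eq_cvg _ _ \oo _ _ _ (Re_series u)); exact: HRe.
- rewrite (@eq_cvg _ _ \oo _ _ _ (Im_series u)); exact: HIm.
Qed.
End Cplx.

Local Close Scope classical_set_scope.
Local Open Scope ring_scope.

Theorem mainTheorem6 (R : realType) (w1 w2 : nat -> cplx R)
  (theta sigma1 sigma2 : {poly cplx R})
  (S St Si Sti : imx (cplx R)) (h : nat -> cplx R) (Linv : imx (cplx R)) :
  (* absolute convergence of the series defining the moments *)
  (forall n m, cvgn (series (fun k => `|moment_term w1 w2 n m k|))) ->
  (* all leading principal minors of the moment matrix are nonzero *)
  (forall N, \det (lead_block (moment w1 w2) N) != 0) ->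
  (* Gauss-Borel factorization M = S^{-1} H St^{-T} *)
  lower_unitri S -> lower_unitri St ->
  is_inv_lt S Si -> is_inv_lt St Sti ->
  moment w1 w2 = imul (imul Si (idiag h)) (itr Sti) ->
  (* L^{-1} is the inverse of the Pascal matrix *)
  is_inv_lt (pascal _) Linv ->
  (* discrete Pearson equations *)
  (forall k, theta.[(k.+1)%:R] * w1 k.+1 = sigma1.[k%:R] * w1 k) ->
  (forall k, theta.[(k.+1)%:R] * w2 k.+1 = sigma2.[k%:R] * w2 k) ->
  theta.[0] = 0 ->
  let H := idiag h in
  let Hinv := idiag (fun n => (h n)^-1) in
  let T := imul (imul S (Lam _)) Si in
  let T1 := imul (imul (imul (imul Hinv St) (Lam1 _)) Sti) H in
  let T2 := imul (imul (imul (imul Hinv St) (Lam2 _)) Sti) H in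
  let Piinv := imul (imul S Linv) Si in
  let Pi1 := imul (imul (imul (imul Hinv St) (pascal1 _)) Sti) H in
  let Pi2 := imul (imul (imul (imul Hinv St) (pascal2 _)) Sti) H in
  imul Piinv (ipoly theta T) =
  iadd (imul (ipoly sigma1 (itr T1)) (itr Pi1))
       (imul (ipoly sigma2 (itr T2)) (itr Pi2)).
Proof.
move=> Habs.
apply: main_gen => n m.
exact: abs_cvg (Habs n m).
Qed.
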